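(* Let $\kappa=(k_0,k_1,k_2,\dots)$ be an infinite sequence of natural numbers with $k_i>1$ for all $i$, and let $\sigma\kappa=(k_1,k_2,\dots)$ denote its shift. Define $E_\kappa$ on finite sequences of natural numbers by $$E_\kappa([\,])=0,\qquad E_\kappa([x_0,x_1,\dots,x_m])=C_{k_0}\big(x_0,\,E_{\sigma\kappa}([x_1,\dots,x_m])\big).$$ Then $E_\kappa$ is a bijection from the set of finite sequences of natural numbers onto $\mathbb{N}$. In particular, for each $b>1$ the map $\mathrm{nats2nat}_b:=E_{(b,b,b,\dots)}$ is a bijection between finite sequences of naturals and $\mathbb{N}$. Its inverse $\mathrm{nat2nats}_b$ is given by $\mathrm{nat2nats}_b(0)=[\,]$ and, for $n>0$, $\mathrm{nat2nats}_b(n)=x:\mathrm{nat2nats}_b(y')$, where $(x,y')=C_b^{-1}(n)$.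
   Context: $\mathbb{N}=\{0,1,2,\dots\}$. For $b>1$, $C_b:\mathbb{N}\times\mathbb{N}\to\mathbb{N}\setminus\{0\}$ is defined by $C_b(x,y')=b^x\,(y'+\lfloor y'/(b-1)\rfloor+1)$. This map is a bijection; its first component is $x=\nu_b(n)$, the $b$-adic valuation of $n$. The notation $x:s$ denotes the sequence with first element $x$ followed by the sequence $s$. *)

(* Defs.v *)
From mathcomp Require Import all_boot.
Set Implicit Arguments. Unset Strict Implicit. Unset Printing Implicit Defensive.

Definition C (b x y' : nat) : nat := b ^ x * (y' + y' %/ (b - 1) + 1).

Definition shift (kappa : nat -> nat) : nat -> nat := fun i => kappa i.+1.

Fixpoint E (kappa : nat -> nat) (s : seq nat) : nat :=
  match s with
  | [::] => 0
  | x :: s' => C (kappa 0) x (E (shift kappa) s')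
  end.

Definition nats2nat (b : nat) : seq nat -> nat := E (fun _ => b).

(* Main.v *)
Require Import Defs.
From mathcomp Require Import all_boot.
From mathcomp Require Import zify.

Lemma m_ndvd b y : 1 < b -> ~~ (b %| y + y %/ (b - 1) + 1).
Proof.
move=> hb.
have hd : 0 < b - 1 by lia.
have e := divn_eq y (b - 1).
have hr : y %% (b - 1) < b - 1 by rewrite ltn_mod.
have -> : y + y %/ (b - 1) + 1 = y %/ (b - 1) * b + (y %% (b - 1)).+1.
  move: e hr; set q := y %/ (b - 1); set r := y %% (b - 1) => e hr.
  rewrite {1}e. have -> : b = (b - 1).+1 by lia. nia.
rewrite dvdn_addr ?dvdn_mull // gtnNdvd //; lia.
Qed.

Lemma m_surj b m : 1 < b -> ~~ (b %| m) -> exists y, y + y %/ (b - 1) + 1 = m.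
Proof.
move=> hb hm.
have hs : 0 < m %% b.
  rewrite lt0n; apply: contra hm => /eqP h; apply/dvdnP; exists (m %/ b); rewrite {1}(divn_eq m b) h addn0; done.
have hs2 : m %% b < b by rewrite ltn_mod; lia.
exists ((m %/ b) * (b - 1) + (m %% b).-1).
rewrite divnMDl; last lia.
rewrite (divn_small (m:=(m %% b).-1)); last lia.
rewrite addn0 {4}(divn_eq m b).
set q := m %/ b. move: hs hs2; set s := m %% b => hs hs2.
have -> : b = (b - 1).+1 by lia. nia.
Qed.

Lemma m_inj b y1 y2 : 1 < b -> y1 + y1 %/ (b - 1) + 1 = y2 + y2 %/ (b - 1) + 1 -> y1 = y2.
Proof.
move=> hb e.
have [h|h|h] := ltngtP y1 y2; last done.
- have := leq_div2r (b - 1) (ltnW h). lia.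
- have := leq_div2r (b - 1) (ltnW h). lia.
Qed.

Lemma val_inj b x1 x2 m1 m2 : 1 < b -> ~~ (b %| m1) -> ~~ (b %| m2) ->
  b ^ x1 * m1 = b ^ x2 * m2 -> x1 = x2 /\ m1 = m2.
Proof.
move=> hb h1 h2; elim: x1 x2 => [|k IH] [|j] /=.
- by rewrite !expn0 !mul1n.
- rewrite expn0 mul1n expnS -mulnA => e; move: h1; by rewrite e dvdn_mulr.
- rewrite expn0 mul1n expnS -mulnA => e; move: h2; by rewrite -e dvdn_mulr.
- rewrite !expnS -!mulnA => /eqP; rewrite eqn_pmul2l; last lia.
  by move=> /eqP /IH [-> ->].
Qed.

Lemma C_inj b x1 y1 x2 y2 : 1 < b -> C b x1 y1 = C b x2 y2 -> x1 = x2 /\ y1 = y2.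
Proof.
move=> hb; rewrite /C => /(val_inj _ _ _ _ _ hb (m_ndvd _ y1 hb) (m_ndvd _ y2 hb)) [-> e].
by split => //; apply: m_inj _ _ _ hb e.
Qed.

Lemma C_pos b x y : 1 < b -> 0 < C b x y.
Proof. move=> hb; rewrite /C muln_gt0 expn_gt0 addn1 andbT; apply/orP; left; lia. Qed.

Lemma dec_pos b n : 1 < b -> 0 < n -> exists x m, ~~ (b %| m) /\ n = b ^ x * m.
Proof.
move=> hb; elim: n {-2}n (leqnn n) => [|N IH] n hn hpos; first lia.
case hd: (b %| n).
- have e : n = b * (n %/ b) by rewrite mulnC divnK.
  have hq : 0 < n %/ b by rewrite divn_gt0; [rewrite dvdn_leq | lia].
  have hlt : n %/ b < n by rewrite ltn_Pdiv.
  have [x [m [hm em]]] := IH (n %/ b) ltac:(lia) hq.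
  exists x.+1, m; split => //; rewrite e em expnS mulnA //.
- exists 0, n; split; [by rewrite hd | by rewrite expn0 mul1n].
Qed.

Lemma C_surj b n : 1 < b -> 0 < n -> exists x y, C b x y = n /\ y < n.
Proof.
move=> hb hn; have [x [m [hm e]]] := dec_pos _ _ hb hn.
have [y ey] := m_surj _ _ hb hm.
exists x, y; rewrite /C ey; split => //.
rewrite e -ey. have : 0 < b ^ x by rewrite expn_gt0; lia. move: (b ^ x) (y %/ (b - 1)) => p q. nia.
Qed.

Lemma E_inj kappa : (forall i, 1 < kappa i) -> injective (E kappa).
Proof.
move=> hk s1; elim: s1 kappa hk => [|x s IH] kappa hk [|x2 s2] //=.
- move=> e; have := C_pos _ x2 (E (shift kappa) s2) (hk 0); lia.
- move=> e; have := C_pos _ x (E (shift kappa) s) (hk 0); lia.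
- move=> /(C_inj _ _ _ _ _ (hk 0)) [-> e]; congr (_ :: _); exact: (IH _ (fun i => hk i.+1) _ e).
Qed.

Lemma E_surj kappa : (forall i, 1 < kappa i) -> forall n, exists s, E kappa s = n.
Proof.
move=> hk n; elim: n {-2}n (leqnn n) kappa hk => [|N IH] n hn kappa hk.
- exists [::]; by case: n hn.
- case: n hn => [|n] hn; first by exists [::].
  have [x [y [e hy]]] := C_surj _ _ (hk 0) (ltn0Sn n).
  have [s es] := IH y ltac:(lia) (shift kappa) (fun i => hk i.+1).
  by exists (x :: s) => /=; rewrite es.
Qed.

Lemma E_surjb kappa (hk : forall i, 1 < kappa i) n : exists s, E kappa s == n.
Proof. have [s e] := E_surj kappa hk n; exists s; exact/eqP. Qed.

Definition Einv kappa (hk : forall i, 1 < kappa i) (n : nat) : seq nat :=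
  xchoose (E_surjb _ hk n).

Lemma Einv_K1 kappa (hk : forall i, 1 < kappa i) : cancel (E kappa) (Einv _ hk).
Proof. move=> s; apply: (E_inj _ hk); apply/eqP; exact: (xchooseP (E_surjb _ hk _)). Qed.

Lemma Einv_K2 kappa (hk : forall i, 1 < kappa i) : cancel (Einv _ hk) (E kappa).
Proof. move=> n; apply/eqP; exact: (xchooseP (E_surjb _ hk _)). Qed.

Theorem mainTheorem3 :
  (forall kappa : nat -> nat, (forall i, 1 < kappa i) -> bijective (E kappa)) /\
  (forall b : nat, 1 < b ->
     bijective (nats2nat b) /\
     exists nat2nats : nat -> seq nat,
       [/\ cancel (nats2nat b) nat2nats, cancel nat2nats (nats2nat b),
           nat2nats 0 = [::] &
           forall n x y', 0 < n -> C b x y' = n ->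
             nat2nats n = x :: nat2nats y']).
Proof.
split.
  move=> kappa hk; exact: (Bijective (Einv_K1 _ hk) (Einv_K2 _ hk)).
move=> b hb.
have hk : forall i : nat, 1 < (fun _ => b) i by [].
split; first exact: (Bijective (Einv_K1 _ hk) (Einv_K2 _ hk)).
exists (Einv _ hk); split.
- exact: Einv_K1.
- exact: Einv_K2.
- apply: (E_inj _ hk); by rewrite Einv_K2.
- move=> n x y' _ e; apply: (E_inj _ hk).
  rewrite Einv_K2 /=. change (shift (fun _ => b)) with (fun _ : nat => b).
  by rewrite Einv_K2.
Qed.
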